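(* Let $e$ be a well-typed muse-$\mathsf{MATLANG}$ expression, and let $\texttt{SRing}$ be the set of semirings used by $e$. Let $T$ be a semiring in $\texttt{SRing}$ such that for all $R \in \texttt{SRing}$ we have $|R| \leq |T|$. Then there exists an expression in dec-$\mathsf{MATLANG}$ defined over $T$ that is equivalent to $e$.
   Context: dec-$\mathsf{MATLANG}$ is a matrix language over a fixed semiring with a repertoire $\Omega$ of pointwise functions, with expressions: matrix variables, transpose $e^T$, one-vector $\mathbf{1}(e)$, $\mathrm{diag}(e)$, matrix multiplication $e_1\cdot e_2$, pointwise application $\mathrm{apply}[f](e_1,\ldots,e_k)$; the operation $\mathrm{pickAny}(e)$, which keeps in each row the nonzero entry of minimal column index and sets all other entries to zero; and a simultaneous-induction loop $\texttt{for}\,\{M_1 := e_1',\ldots,M_m := e_m'\}(e_d,e_1,\ldots,e_m)$ that initializes each $M_i$ to $e_i$, then simultaneously updates all $M_i$ to $e_i'$ exactly $n$ times where $e_d$ evaluates to an $n\times 1$ vector, returning the final $M_1$. muse-$\mathsf{MATLANG}$ is dec-$\mathsf{MATLANG}$ where a type is a triple $s_1\times s_2\times r$ with $r$ a semiring from a nonempty finite set $\texttt{SRing}$; the repertoire $\Omega$ consists of functions $f: R_1\times\cdots\times R_k\to R_o$ with possibly distinct semirings (allowing casts between semirings); matrix multiplication requires both operands over the same semiring, and every operation (addition, multiplication, zero, one) uses the semiring associated with its input. Equivalence is meant via injective encodings $\mathrm{enc}_R: R\to T$ with retractions $\mathrm{dec}_R$: the dec-$\mathsf{MATLANG}$ expression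 $\hat e$ satisfies $[\![e]\!]_{\mathcal I} = \mathrm{dec}_R([\![\hat e]\!]_{\hat{\mathcal I}})$, where $\hat{\mathcal I}$ encodes each input matrix via $\mathrm{enc}_R$. *)

(* Defs.v *)
From HB Require Import structures.
From mathcomp Require Import all_boot all_order all_algebra.
Set Implicit Arguments. Unset Strict Implicit. Unset Printing Implicit Defensive.
Import GRing.Theory.
Local Open Scope ring_scope.

Inductive sdim : Type := dOne | dSym of nat.

(* A type s1 x s2 x r, with r an index into the family of semirings. *)
Definition ty (I : Type) : Type := (sdim * sdim * I)%type.

(* Pointwise functions may be arbitrary functions R_1 x .. x R_k -> R_o
   (k >= 1). *)
Inductive mexpr (I : Type) (R : I -> pzSemiRingType) (V : Type)
    (sch : V -> ty I) : ty I -> Type :=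
| EVar (x : V) : mexpr R sch (sch x)
| ETr (a b : sdim) (r : I) : mexpr R sch (a, b, r) -> mexpr R sch (b, a, r)
| EOne (a b : sdim) (r : I) : mexpr R sch (a, b, r) -> mexpr R sch (a, dOne, r)
| EDiag (a : sdim) (r : I) : mexpr R sch (a, dOne, r) -> mexpr R sch (a, a, r)
| EMul (a b c : sdim) (r : I) :
    mexpr R sch (a, b, r) -> mexpr R sch (b, c, r) -> mexpr R sch (a, c, r)
| EApply (a b : sdim) (k : nat) (rs : 'I_k.+1 -> I) (ro : I)
    (f : (forall j : 'I_k.+1, R (rs j)) -> R ro)
    (args : forall j : 'I_k.+1, mexpr R sch (a, b, rs j)) : mexpr R sch (a, b, ro)
| EPick (a b : sdim) (r : I) : mexpr R sch (a, b, r) -> mexpr R sch (a, b, r)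
| EFor (a : sdim) (r0 : I) (m : nat) (xs : 'I_m.+1 -> V) (Hxs : injective xs)
    (ed : mexpr R sch (a, dOne, r0))
    (init : forall j : 'I_m.+1, mexpr R sch (sch (xs j)))
    (upd : forall j : 'I_m.+1, mexpr R sch (sch (xs j))) :
    mexpr R sch (sch (xs ord0)).

Definition pickAny (K : pzSemiRingType) (p q : nat) (A : 'M[K]_(p, q)) : 'M[K]_(p, q) :=
  \matrix_(i, j) (if (A i j != 0) && [forall k : 'I_q, (k < j)%N ==> (A i k == 0)]
                  then A i j else 0).

Section Semantics.
Variables (I : Type) (R : I -> pzSemiRingType) (V : eqType) (sch : V -> ty I).
(* An instance assigns a natural number to each named size symbol
   (the symbol 1 is always interpreted by 1) ... *)
Variable D : nat -> nat.

Definition dimv (d : sdim) : nat := match d with dOne => 1%N | dSym s => D s end.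

Definition mat (t : ty I) : Type := 'M[R t.2]_(dimv t.1.1, dimv t.1.2).

Definition env : Type := forall x : V, mat (sch x).

Definition upd1 (E : env) (x : V) (M : mat (sch x)) : env :=
  fun y => match @eqP V x y with
           | ReflectT p => eq_rect x (fun z => mat (sch z)) M y p
           | ReflectF _ => E y
           end.

Definition setall (E : env) (m : nat) (xs : 'I_m.+1 -> V)
    (st : forall j : 'I_m.+1, mat (sch (xs j))) : env :=
  foldr (fun j E' => upd1 E' (st j)) E (enum 'I_m.+1).

Fixpoint eval (E : env) (t : ty I) (e : mexpr R sch t) {struct e} : mat t :=
  match e in mexpr _ _ t return mat t with
  | EVar x => E x
  | ETr _ _ _ e1 => (eval E e1)^T
  | EOne a _ r _ => const_mx (1 : R r)
  | EDiag a r e1 =>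
      let v := eval E e1 in \matrix_(i, j) (if i == j then v i ord0 else 0)
  | EMul _ _ _ _ e1 e2 => eval E e1 *m eval E e2
  | EApply a b k rs ro f args =>
      \matrix_(i, j) f (fun l => eval E (args l) i j)
  | EPick _ _ _ e1 => pickAny (eval E e1)
  | EFor a _ m xs _ _ init upd =>
      (iter (dimv a)
         (fun st : (forall j : 'I_m.+1, mat (sch (xs j))) =>
            fun j => eval (setall E st) (upd j))
         (fun j => eval E (init j))) ord0
  end.
End Semantics.

(* dec-MATLANG over a single semiring T: the instance with one semiring. *)
Definition Rdec (T : pzSemiRingType) : unit -> pzSemiRingType := fun _ => T.

(* Variables of the translated expression: inl x is the input variable x of
   the original expression; inr y are auxiliary variables with schema aux. *)
Definition dsch (I : Type) (sch : nat -> ty I) (aux : nat -> ty unit)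
    (v : (nat + nat)%type) : ty unit :=
  match v with inl x => ((sch x).1.1, (sch x).1.2, tt) | inr y => aux y end.

Definition encenv (I : Type) (R : I -> pzSemiRingType) (T : pzSemiRingType)
    (enc : forall i, R i -> T) (sch : nat -> ty I) (aux : nat -> ty unit)
    (D : nat -> nat) (E : env R sch D)
    (Eaux : forall y : nat, mat (Rdec T) D (aux y)) :
    env (Rdec T) (dsch sch aux) D :=
  fun v => match v as v return mat (Rdec T) D (dsch sch aux v) with
           | inl x => map_mx (enc (sch x).2) (E x)
           | inr y => Eaux y
           end.

(* Main.v *)
Require Import Defs.
From HB Require Import structures.
From mathcomp Require Import all_boot all_order all_algebra.
From Stdlib Require Import FunctionalExtensionality ClassicalEpsilon.
Set Implicit Arguments. Unset Strict Implicit. Unset Printing Implicit Defensive.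
Import GRing.Theory.
Local Open Scope ring_scope.


Section EnvLemmas.
Variables (I : Type) (R : I -> pzSemiRingType) (V : eqType) (sch : V -> ty I) (D : nat -> nat).

Lemma upd1_same (E : env R sch D) x (M : mat R D (sch x)) : upd1 E M x = M.
Proof.
rewrite /upd1; case: eqP => // p.
by rewrite (eq_irrelevance p (erefl x)).
Qed.

Lemma upd1_other (E : env R sch D) x (M : mat R D (sch x)) y : x != y -> upd1 E M y = E y.
Proof. by rewrite /upd1; case: eqP. Qed.

Lemma setall_val (E : env R sch D) m (xs : 'I_m.+1 -> V) (st : forall j, mat R D (sch (xs j))) :
  injective xs -> forall j, setall E st (xs j) = st j.
Proof.
move=> inj j; rewrite /setall.
have : j \in enum 'I_m.+1 by rewrite mem_enum.
elim: (enum 'I_m.+1) => //= i l IH.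
rewrite inE; case: (eqVneq (xs i) (xs j)) => [e|ne] H.
  have eij := inj _ _ e; subst j; exact: upd1_same.
rewrite upd1_other //; apply: IH.
move: H; case: (eqVneq j i) => [eji|//]; by rewrite eji eqxx in ne.
Qed.

Lemma setall_notin (E : env R sch D) m (xs : 'I_m.+1 -> V) (st : forall j, mat R D (sch (xs j))) y :
  (forall j, xs j != y) -> setall E st y = E y.
Proof.
move=> h; rewrite /setall.
elim: (enum 'I_m.+1) => //= i l IH.
by rewrite upd1_other.
Qed.
End EnvLemmas.


Definition code_sd (d : sdim) : nat := match d with dOne => 0 | dSym s => s.+1 end.
Definition decode_sd (n : nat) : sdim := match n with 0 => dOne | s.+1 => dSym s end.
Definition aux (n : nat) : ty unit :=
  match @unpickle (nat * nat * nat)%type n with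
  | Some (_, p, q) => (decode_sd p, decode_sd q, tt)
  | None => (dOne, dOne, tt) end.
Definition auxN (k : nat) (a c : sdim) : nat := pickle (k, code_sd a, code_sd c).
Lemma auxP k a c : aux (auxN k a c) = (a, c, tt).
Proof. by rewrite /aux /auxN pickleK; case: a; case: c. Qed.
Lemma auxN_neq a c b : auxN 0 a c != auxN 1 b dOne.
Proof. by apply/eqP => /(pcan_inj pickleK). Qed.

Definition o1_2 : 'I_2 := @Ordinal 2 1 isT.
Definition o1_3 : 'I_3 := @Ordinal 3 1 isT.

Definition xs2 (v1 v2 : nat) (j : 'I_2) : (nat + nat)%type :=
  match nat_of_ord j with 0 => inr v1 | _ => inr v2 end.
Lemma xs2_inj v1 v2 : v1 != v2 -> injective (xs2 v1 v2).
Proof.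
move=> ne [[|[|i]] Hi] [[|[|j]] Hj] //=; rewrite /xs2 /=;
  try (by move=> _; apply: val_inj); try (by case=> e; rewrite e eqxx in ne).
Qed.

Definition mk2 (F : (nat + nat)%type -> Type) v1 v2 (x0 : F (inr v1)) (x1 : F (inr v2)) :
  forall j, F (xs2 v1 v2 j) :=
  fun j => match j as j0 return F (xs2 v1 v2 j0) with
  | @Ordinal _ n H =>
    (match n as n0 return (forall H0 : (n0 < 2)%N, F (xs2 v1 v2 (Ordinal H0))) with
     | 0 => fun _ => x0 | _.+1 => fun _ => x1 end) H end.

Definition a2 (X : Type) (x0 x1 : X) (j : 'I_2) : X := match nat_of_ord j with 0 => x0 | _ => x1 end.
Definition a3 (X : Type) (x0 x1 x2 : X) (j : 'I_3) : X :=
  match nat_of_ord j with 0 => x0 | 1 => x1 | _ => x2 end.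

Lemma inl_inj (V W : Type) m (xs : 'I_m.+1 -> V) : injective xs -> injective (fun j => (@inl V W (xs j))).
Proof. by move=> h i j [] /h. Qed.

Section Trans.
Variables (I : Type) (R : I -> pzSemiRingType) (sch : nat -> ty I) (T : pzSemiRingType)
  (enc : forall i, R i -> T) (dec : forall i, T -> R i).

Local Notation S' := (dsch sch aux).
Local Notation ME := (mexpr (Rdec T) S').

Definition castE t1 t2 (p : t1 = t2) (e : ME t1) : ME t2 := eq_rect t1 ME e t2 p.

Definition fmul r (v : forall j : 'I_3, T) : T :=
  @enc r (@dec r (v ord0) * @dec r (v o1_3) + @dec r (v ord_max)).

Definition mulT (a b c : sdim) (r : I) (A' : ME (a, b, tt)) (B' : ME (b, c, tt)) : ME (a, c, tt) :=
  let v1 := auxN 0 a c in let v2 := auxN 1 b dOne in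
  let X1 : ME (a, c, tt) := castE (auxP 0 a c) (EVar (Rdec T) S' (inr v1)) in
  let X2 : ME (b, dOne, tt) := castE (auxP 1 b dOne) (EVar (Rdec T) S' (inr v2)) in
  let C : ME (b, dOne, tt) := ETr (EPick (ETr X2)) in
  let colA : ME (a, c, tt) := EMul (EMul A' C) (ETr (EOne (ETr B'))) in
  let rowB : ME (a, c, tt) := EMul (EOne A') (EMul (ETr C) B') in
  let body1 : ME (a, c, tt) :=
    EApply (k := 2) (rs := fun _ => tt) (ro := tt) (fmul r) (a3 colA rowB X1) in
  let body2 : ME (b, dOne, tt) :=
    EApply (k := 1) (rs := fun _ => tt) (ro := tt)
      (fun v : forall j : 'I_2, T => if v o1_2 == 0 then v ord0 else 0) (a2 X2 C) in
  let init1 : ME (a, c, tt) :=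
    EApply (k := 0) (rs := fun _ => tt) (ro := tt) (fun _ => @enc r 0) (fun _ => EMul A' B') in
  let init2 : ME (b, dOne, tt) := EOne (ETr A') in
  castE (auxP 0 a c)
    (EFor (xs := xs2 v1 v2) (xs2_inj (auxN_neq a c b)) (EOne (ETr A'))
       (@mk2 (fun v => ME (S' v)) v1 v2 (castE (esym (auxP 0 a c)) init1) (castE (esym (auxP 1 b dOne)) init2))
       (@mk2 (fun v => ME (S' v)) v1 v2 (castE (esym (auxP 0 a c)) body1) (castE (esym (auxP 1 b dOne)) body2))).

Definition oneT a r (A' : ME (a, dOne, tt)) : ME (a, dOne, tt) :=
  EApply (k := 0) (rs := fun _ => tt) (ro := tt) (fun _ => @enc r 1) (fun _ => A').

Definition diagT a r (A' : ME (a, dOne, tt)) : ME (a, a, tt) :=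
  EApply (k := 1) (rs := fun _ => tt) (ro := tt)
    (fun v : forall j : 'I_2, T => if v o1_2 == 0 then @enc r 0 else v ord0)
    (a2 (EDiag A') (EDiag (EOne A'))).

Definition pickT a b r (A' : ME (a, b, tt)) : ME (a, b, tt) :=
  let M : ME (a, b, tt) := EApply (k := 0) (rs := fun _ => tt) (ro := tt)
     (fun v => if @dec r (v ord0) == 0 then 0 else 1) (fun _ => A') in
  EApply (k := 1) (rs := fun _ => tt) (ro := tt)
    (fun v : forall j : 'I_2, T => if v o1_2 == 0 then @enc r 0 else v ord0)
    (a2 A' (EPick M)).

Fixpoint tr t (e : mexpr R sch t) {struct e} : ME (t.1.1, t.1.2, tt) :=
  match e in mexpr _ _ t return ME (t.1.1, t.1.2, tt) with
  | EVar x => EVar (Rdec T) S' (inl x)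
  | ETr a b r e1 => ETr (tr e1)
  | EOne a b r e1 => oneT r (EOne (tr e1))
  | EDiag a r e1 => diagT r (tr e1)
  | EMul a b c r e1 e2 => mulT r (tr e1) (tr e2)
  | EApply a b k rs ro f args =>
      EApply (k := k) (rs := fun _ => tt) (ro := tt)
        (fun v => @enc ro (f (fun l => @dec (rs l) (v l)))) (fun l => tr (args l))
  | EPick a b r e1 => pickT r (tr e1)
  | EFor a r0 m xs Hxs ed init upd =>
      EFor (xs := fun j => inl (xs j)) (inl_inj Hxs) (tr ed)
        (fun j => tr (init j)) (fun j => tr (upd j))
  end.
End Trans.


Section Sem.
Variables (I : Type) (R : I -> pzSemiRingType) (sch : nat -> ty I) (T : pzSemiRingType)
  (enc : forall i, R i -> T) (dec : forall i, T -> R i).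
Hypothesis encK : forall i, cancel (@enc i) (@dec i).
Hypothesis T1 : (1 : T) != 0.

Local Notation S' := (dsch sch aux).
Local Notation ME := (mexpr (Rdec T) S').

Definition castM D t1 t2 (p : t1 = t2) (M : mat (Rdec T) D t1) : mat (Rdec T) D t2 :=
  eq_rect t1 (mat (Rdec T) D) M t2 p.

Lemma eval_castE D (E : env (Rdec T) S' D) t1 t2 (p : t1 = t2) (e : ME t1) :
  eval E (castE p e) = castM p (eval E e).
Proof. by case: t2 / p. Qed.

Lemma castMK D t1 t2 (p : t1 = t2) (M : mat (Rdec T) D t2) : castM p (castM (esym p) M) = M.
Proof. by case: t2 / p in M *. Qed.


Lemma loop2_inv D (E' : env (Rdec T) S' D) v1 v2 (H : injective (xs2 v1 v2)) a0
  (ed : ME (a0, dOne, tt)) (i0 u0 : ME (S' (inr v1))) (i1 u1 : ME (S' (inr v2)))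
  (P : nat -> mat (Rdec T) D (S' (inr v1)) -> mat (Rdec T) D (S' (inr v2)) -> Prop) :
  P 0 (eval E' i0) (eval E' i1) ->
  (forall k (st : forall j, mat (Rdec T) D (S' (xs2 v1 v2 j))), (k < Defs.dimv D a0)%N ->
     P k (st ord0) (st o1_2) ->
     P k.+1 (eval (setall E' st) u0) (eval (setall E' st) u1)) ->
  forall Q : mat (Rdec T) D (S' (inr v1)) -> Prop,
  (forall M y, P (Defs.dimv D a0) M y -> Q M) ->
  Q (eval E' (EFor H ed (@mk2 (fun v => ME (S' v)) v1 v2 i0 i1) (@mk2 (fun v => ME (S' v)) v1 v2 u0 u1))).
Proof.
move=> h0 hS Q hQ.
pose F := fun (st : forall j : 'I_2, mat (Rdec T) D (S' (xs2 v1 v2 j))) (j : 'I_2) =>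
  eval (setall E' st) (@mk2 (fun v => ME (S' v)) v1 v2 u0 u1 j).
pose st0 := fun j : 'I_2 => eval E' (@mk2 (fun v => ME (S' v)) v1 v2 i0 i1 j).
have key : forall k, (k <= Defs.dimv D a0)%N -> P k (iter k F st0 ord0) (iter k F st0 o1_2).
  elim => [|k IH] hk /=; first exact h0.
  by apply: hS => //; apply: IH; apply: ltnW.
by apply: (hQ _ (iter (Defs.dimv D a0) F st0 o1_2)); apply: key.
Qed.

Definition remk n k : 'M[T]_(n, 1) := \matrix_(l, _) if (l < k)%N then 0 else 1.
Definition delk n k : 'M[T]_(1, n) := \matrix_(_, l) if (l : nat) == k then 1 else 0.

Lemma pick_rem n k : (k < n)%N -> pickAny (remk n k)^T = delk n k.
Proof.
move=> kn; apply/matrixP => i l; rewrite /pickAny !mxE.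
case: (ltngtP l k) => [lt|gt|eq].
- by case: ifP.
- rewrite T1 /=.
  case: forallP => [h|_] //.
  by move: (h (Ordinal kn)); rewrite /= gt !mxE ltnn /= (negbTE T1).
- rewrite T1 /=.
  case: forallP => // h; exfalso; apply: h => k'; apply/implyP => hk.
  by rewrite !mxE -eq hk.
Qed.

Lemma colsel m n k (kk : (k < n)%N) (M : 'M[T]_(m, n)) i j :
  (M *m (delk n k)^T) i j = M i (Ordinal kk).
Proof.
rewrite mxE (bigD1 (Ordinal kk)) //= !mxE eqxx mulr1 big1 ?addr0 // => l nl.
rewrite !mxE; case: eqP => [e|]; last by rewrite mulr0.
by exfalso; move: nl; rewrite -val_eqE /= e eqxx.
Qed.

Lemma rowsel m n k (kk : (k < n)%N) (M : 'M[T]_(n, m)) i j :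
  (delk n k *m M) i j = M (Ordinal kk) j.
Proof.
rewrite mxE (bigD1 (Ordinal kk)) //= !mxE eqxx mul1r big1 ?addr0 // => l nl.
rewrite !mxE; case: eqP => [e|]; last by rewrite mul0r.
by exfalso; move: nl; rewrite -val_eqE /= e eqxx.
Qed.

Lemma colsel1 m n p k (kk : (k < n)%N) (M : 'M[T]_(m, n)) i (j : 'I_p) :
  ((M *m (delk n k)^T) *m (const_mx 1)^T) i j = M i (Ordinal kk).
Proof. by rewrite mxE big_ord1 colsel !mxE mulr1. Qed.

Lemma rowsel1 m n p k (kk : (k < n)%N) (M : 'M[T]_(n, p)) (i : 'I_m) j :
  (const_mx 1 *m (delk n k *m M)) i j = M (Ordinal kk) j.
Proof. by rewrite mxE big_ord1 mxE mul1r rowsel. Qed.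

Lemma eval_mulT D (E' : env (Rdec T) S' D) a b c r (A' : ME (a, b, tt)) (B' : ME (b, c, tt))
   (A : 'M[R r]_(Defs.dimv D a, Defs.dimv D b)) (B : 'M[R r]_(Defs.dimv D b, Defs.dimv D c)) :
  (forall E'', (forall x, E'' (inl x) = E' (inl x)) -> eval E'' A' = map_mx (@enc r) A) ->
  (forall E'', (forall x, E'' (inl x) = E' (inl x)) -> eval E'' B' = map_mx (@enc r) B) ->
  eval E' (mulT enc dec r A' B') = map_mx (@enc r) (A *m B).
Proof.
move=> hA hB.
rewrite /mulT eval_castE.
set n := Defs.dimv D b.
pose Sk k : 'M[R r]_(Defs.dimv D a, Defs.dimv D c) :=
  \matrix_(i, j) \sum_(l < n | (l < k)%N) A i l * B l j.
pose P k (M1 : mat (Rdec T) D (S' (inr (auxN 0 a c)))) (M2 : mat (Rdec T) D (S' (inr (auxN 1 b dOne)))) :=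
  castM (auxP 0 a c) M1 = map_mx (@enc r) (Sk k) /\ castM (auxP 1 b dOne) M2 = remk n k.
refine (@loop2_inv D E' _ _ (xs2_inj (auxN_neq a c b)) b _ _ _ _ _ P _ _
   (fun M => castM (auxP 0 a c) M = map_mx (@enc r) (A *m B)) _); last first.
- move=> M y [-> _]; congr map_mx; apply/matrixP => i j; rewrite !mxE; apply: eq_bigl => l; exact: ltn_ord.
- move=> k st kn [h1 h2].
  set E2 := setall E' st.
  have EA : eval E2 A' = map_mx (@enc r) A.
    by apply: hA => x; apply: setall_notin => j; rewrite /xs2; case: (nat_of_ord j).
  have EB : eval E2 B' = map_mx (@enc r) B.
    by apply: hB => x; apply: setall_notin => j; rewrite /xs2; case: (nat_of_ord j).
  have X1 : E2 (inr (auxN 0 a c)) = st ord0 := setall_val E' st (xs2_inj (auxN_neq a c b)) ord0.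
  have X2 : E2 (inr (auxN 1 b dOne)) = st o1_2 := setall_val E' st (xs2_inj (auxN_neq a c b)) o1_2.
  split; rewrite eval_castE castMK /=.
  + apply/matrixP => i j; rewrite !mxE /fmul /=.
    rewrite /a3 /ord_max /= !eval_castE /= X1 X2 h1 h2 EA EB pick_rem // trmxK.
    rewrite (colsel1 kn) (rowsel1 kn) !mxE !encK.
    congr (@enc r); rewrite [RHS](bigD1 (Ordinal kn)) /= ?ltnSn //; congr (_ + _).
    apply: eq_bigl => l /=; rewrite -val_eqE /=; case: (ltngtP l k) => h.
    * by rewrite ltnS (ltnW h).
    * by rewrite ltnS leqNgt h.
    * by rewrite andbF.
  + apply/matrixP => i j; rewrite mxE /= !eval_castE /= X2 h2 pick_rem // !mxE.
    case: (ltngtP i k) => h.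
    * by rewrite eqxx ltnS (ltnW h).
    * by rewrite eqxx ltnS leqNgt h.
    * by rewrite (negbTE T1) h ltnSn.
- split; rewrite eval_castE castMK /=; apply/matrixP => i j; rewrite !mxE //.
  by rewrite big_pred0 // => l.
Qed.

Lemma ind_eq (K : pzSemiRingType) (x : K) : ((if x == 0 then (0:T) else 1) == 0) = (x == 0).
Proof. by case: (x == 0); rewrite ?eqxx // (negbTE T1). Qed.

Lemma pick_transfer r p q (A : 'M[R r]_(p, q)) i j :
  (if pickAny (\matrix_(i0, j0) (if @dec r (map_mx (@enc r) A i0 j0) == 0 then (0:T) else 1)) i j == 0
   then @enc r 0 else map_mx (@enc r) A i j) = map_mx (@enc r) (pickAny A) i j.
Proof.
set M := \matrix_(i0, j0) _.
have key : forall k, (M i k == 0) = (A i k == 0).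
  by move=> k; rewrite !mxE encK; apply: ind_eq.
have F : [forall k : 'I_q, (k < j)%N ==> (M i k == 0)] = [forall k : 'I_q, (k < j)%N ==> (A i k == 0)].
  by apply: eq_forallb => k; rewrite key.
rewrite /pickAny !mxE F encK.
case: (A i j == 0); case: [forall k, _]; rewrite /= ?eqxx ?T1 ?(negbTE T1) /= ?eqxx //.
Qed.

Definition relE D (E : env R sch D) (E' : env (Rdec T) S' D) :=
  forall x, E' (inl x) = map_mx (@enc (sch x).2) (E x).

Lemma rel_setall D (E : env R sch D) (E' : env (Rdec T) S' D) m (xs : 'I_m.+1 -> nat)
  (st : forall j, mat R D (sch (xs j)))
  (st' : forall j, mat (Rdec T) D (S' (inl (xs j)))) :
  relE E E' -> (forall j, st' j = map_mx (@enc (sch (xs j)).2) (st j)) ->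
  relE (setall E st) (@setall _ _ _ S' D E' m (fun j => inl (xs j)) st').
Proof.
move=> h hs x; rewrite /setall; elim: (enum _) => [|i l IH] /=; first exact: h.
case: (eqVneq (xs i) x) => [e|ne].
  by subst x; rewrite upd1_same upd1_same hs.
rewrite upd1_other ?upd1_other //; by apply: contra ne => /eqP [] ->.
Qed.

Lemma tr_sound D t (e : mexpr R sch t) :
  forall (E : env R sch D) (E' : env (Rdec T) S' D), relE E E' ->
  eval E' (tr enc dec e) = map_mx (@enc t.2) (eval E e).
Proof.
elim: e.
- by move=> x E E' h; exact: h.
- by move=> a b r e1 IH E E' h /=; rewrite (IH _ _ h) map_trmx.
- by move=> a b r e1 IH E E' h /=; apply/matrixP => i j; rewrite !mxE.
- move=> a r e1 IH E E' h /=; apply/matrixP => i j; rewrite !mxE (IH _ _ h) !mxE.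
  by case: (i == j); rewrite ?eqxx ?(negbTE T1).
- move=> a b c r e1 IH1 e2 IH2 E E' h /=.
  by apply: eval_mulT => E'' h''; [apply: IH1 | apply: IH2] => x; rewrite h''.
- move=> a b k rs ro f args IH E E' h /=; apply/matrixP => i j; rewrite !mxE.
  congr (@enc ro (f _)); apply: functional_extensionality_dep => l.
  by rewrite (IH l _ _ h) mxE encK.
- move=> a b r e1 IH E E' h /=; apply/matrixP => i j; rewrite mxE /= (IH _ _ h).
  exact: pick_transfer.
- move=> a r0 m xs Hxs ed IHed init IHinit upd IHupd E E' h /=.
  have K : forall k (j : 'I_m.+1),
    iter k (fun (st : forall j : 'I_m.+1, mat (Rdec T) D ((sch (xs j)).1.1, (sch (xs j)).1.2, tt)) j =>
              eval (@setall _ _ _ S' D E' m (fun j => inl (xs j)) st) (tr enc dec (upd j))) (fun j => eval E' (tr enc dec (init j))) j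
    = map_mx (@enc (sch (xs j)).2)
        (iter k (fun (st : forall j : 'I_m.+1, mat R D (sch (xs j))) j => eval (setall E st) (upd j))
           (fun j => eval E (init j)) j).
    elim => [|k IH] j /=; first exact: IHinit.
    by apply: IHupd; apply: rel_setall.
  exact: K.
Qed.
End Sem.

Unset Implicit Arguments.
Close Scope ring_scope.

Theorem theorem3 (I : finType) (R : I -> pzSemiRingType) (sch : nat -> ty I)
    (t : I) (a b : sdim) (r : I) (e : mexpr R sch (a, b, r))
    (Hcard : forall i : I, exists f : R i -> R t, injective f) :
  exists (enc : forall i : I, R i -> R t) (dec : forall i : I, R t -> R i),
    (forall i, injective (enc i)) /\ (forall i, cancel (enc i) (dec i)) /\
    exists (aux : nat -> ty unit)
           (e' : mexpr (Rdec (R t)) (dsch sch aux) (a, b, tt)),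
      forall (D : nat -> nat) (E : env R sch D)
             (Eaux : forall y : nat, mat (Rdec (R t)) D (aux y)),
        eval E e = map_mx (dec r) (eval (encenv enc E Eaux) e').
Proof.
pose enc := fun i => proj1_sig (constructive_indefinite_description _ (Hcard i)).
have encI : forall i, injective (enc i).
  by move=> i; exact: (proj2_sig (constructive_indefinite_description _ (Hcard i))).
pose dec := fun i (y : R t) =>
  match excluded_middle_informative (exists x, enc i x = y) with
  | left H => proj1_sig (constructive_indefinite_description _ H)
  | right _ => (0 : R i)%R end.
have encK : forall i, cancel (enc i) (dec i).
  move=> i x; rewrite /dec; case: excluded_middle_informative => [H|[]]; last by exists x.
  by apply: encI; exact: (proj2_sig (constructive_indefinite_description _ H)).
exists enc, dec; split => //; split => //.
exists aux, (tr enc dec e) => D E Eaux.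
case: (eqVneq (1 : R t)%R 0%R) => [T0|T1].
  have all0 : forall y : R t, y = 0%R.
    by move=> y; rewrite -(GRing.mulr1 y) T0 GRing.mulr0.
  apply/matrixP => i j; apply: (encI r); by rewrite (all0 (enc r _)) (all0 (enc r _)).
rewrite (@tr_sound I R sch (R t) enc dec encK T1 D (a, b, r) e E (encenv enc E Eaux)) //.
by apply/matrixP => i j; rewrite !mxE encK.
Qed.
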